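(* Let $m\ge 2$ and let $B$ be a blocker in $CK(2m)$ such that $e=[2m-3,2m-2]\in B$ and $f=[2m-2,2m-1]\notin B$. Let $G'$ be the complete convex geometric graph on the $2m-2$ vertices $0,1,\dots,2m-3$ (the subgraph of $CK(2m)$ induced by deleting the endpoints $2m-2,2m-1$ of $f$). Then $B\setminus\{e\}$ is a set of edges of $G'$ and is a blocker in $G'$ (a blocking set of $G'$ of size $m-1$).
   Context: $CK(2m)$ denotes the complete convex geometric graph whose vertices are the $2m$ vertices of a convex polygon, labelled cyclically $0,1,\dots,2m-1$, and whose edges are all straight segments between pairs of vertices. Two edges with four distinct endpoints cross iff their endpoints alternate in the cyclic order. More generally, for a set of $2n$ points in convex position, consider the complete convex geometric graph on them; an SPM is a set of $n$ pairwise disjoint edges (no common endpoint and no crossing), a blocking set is a set of edges containing at least one edge of every SPM, and a blocker is a blocking set of exactly $n$ edges. *)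

(* Defs.v *)
From mathcomp Require Import all_boot.
Set Implicit Arguments. Unset Strict Implicit. Unset Printing Implicit Defensive.

(* Complete convex geometric graph on N points in convex position, labelled
   cyclically 0,1,...,N-1 (the cyclic order is the natural order of labels). *)

Definition is_edge (N : nat) (e : nat * nat) : bool := (e.1 < e.2) && (e.2 < N).

(* two edges (with a < b) cross iff their endpoints alternate in cyclic order *)
Definition crossing (e f : nat * nat) : bool :=
  ((e.1 < f.1) && (f.1 < e.2) && (e.2 < f.2)) ||
  ((f.1 < e.1) && (e.1 < f.2) && (f.2 < e.2)).

Definition disjoint_edges (e f : nat * nat) : bool :=
  [&& e.1 != f.1, e.1 != f.2, e.2 != f.1, e.2 != f.2 & ~~ crossing e f].

Definition SPM (n : nat) (M : seq (nat * nat)) : Prop :=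
  [/\ all (is_edge n.*2) M, uniq M, size M = n & pairwise disjoint_edges M].

Definition blocking_set (n : nat) (S : seq (nat * nat)) : Prop :=
  [/\ all (is_edge n.*2) S, uniq S &
      forall M, SPM n M -> has (fun e => e \in S) M].

Definition blocker (n : nat) (S : seq (nat * nat)) : Prop :=
  blocking_set n S /\ size S = n.

(* Main.v *)
From Stdlib Require Import Lia.
Require Import Defs.
From mathcomp Require Import all_boot.

Ltac natify :=
  repeat match goal with
  | H : is_true (_ && _) |- _ => case/andP: H
  | H : is_true (_ || _) |- _ => case/orP: H
  | H : is_true (~~ (_ <= _)) |- _ => rewrite -ltnNge in H
  | H : is_true (_ <= _) |- _ => move/leP: H
  | H : is_true (@eq_op nat _ _) |- _ => move/eqP: H
  | H : is_true (~~ (@eq_op nat _ _)) |- _ => move/eqP: H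
  | |- forall _, _ => rewrite -?addnn -?plusE -?minusE; intro
  end; rewrite -?addnn -?plusE -?minusE.

Definition gk (k n x : nat) : nat * nat :=
  if x < k then (x, k.*2 - 1 - x) else (x, k.*2 + n.*2 - 1 - x).
Definition Mk k n := [seq gk k n x | x <- iota 0 k ++ iota k.*2 (n - k)].
Definition sumc k n (e : nat * nat) :=
  (e.1 + e.2).+1 = k.*2 \/ (e.1 + e.2).+1 = k.*2 + n.*2.

Lemma Mk_prop k n e : k < n -> e \in Mk k n -> is_edge n.*2 e /\ sumc k n e.
Proof.
move=> hk /mapP [x]; rewrite mem_cat !mem_iota => Hx ->.
rewrite /gk /is_edge /sumc; case: (ltnP x k) => Hxk /=; move: hk Hx Hxk; natify;
  (split; [apply/andP; split; apply/leP|]; rewrite -?addnn -?plusE -?minusE; lia).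
Qed.
Arguments Mk_prop {k n e}.

Lemma disj_sum k n e f : k < n -> is_edge n.*2 e -> is_edge n.*2 f ->
  sumc k n e -> sumc k n f -> e != f -> disjoint_edges e f.
Proof.
case: e f => a b [c d]; rewrite /is_edge /disjoint_edges /crossing /sumc /=.
move=> hk he hf se sf /eqP hne.
have hne' : ~ (a = c /\ b = d) by move=> [? ?]; subst.
move: hk he hf se sf; natify.
repeat (apply/andP; split); try (apply/eqP; lia).
apply/negP => /orP [/andP [/andP [? ?] ?] | /andP [/andP [? ?] ?]]; natify; lia.
Qed.

Lemma pairwise_of (T : eqType) (Q : T -> Prop) (R : rel T) (s : seq T) :
  uniq s -> (forall e, e \in s -> Q e) ->
  (forall e f, Q e -> Q f -> e != f -> R e f) -> pairwise R s.
Proof.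
elim: s => [//|x s IH] /= /andP [xs us] HQ HR.
rewrite IH ?andbT //; last by move=> e he; apply: HQ; rewrite inE he orbT.
apply/allP => y ys; apply: HR; first by apply: HQ; rewrite inE eqxx.
  by apply: HQ; rewrite inE ys orbT.
by apply/eqP => exy; rewrite exy ys in xs.
Qed.

Lemma SPM_Mk {k n} : k < n -> SPM n (Mk k n).
Proof.
move=> hk.
have umk : uniq (Mk k n).
  apply: (@map_uniq _ _ fst); rewrite /Mk -map_comp.
  have -> : [seq (fst \o gk k n) x | x <- iota 0 k ++ iota k.*2 (n - k)]
          = iota 0 k ++ iota k.*2 (n - k).
    by rewrite -[RHS]map_id; apply: eq_map => x; rewrite /= /gk; case: ifP.
  rewrite cat_uniq !iota_uniq andbT /=; apply/hasPn => x.
  rewrite !mem_iota => hx; apply/negP => hx'; move: hx hx'; natify; lia.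
split => //.
- by apply/allP => e he; case: (Mk_prop hk he).
- rewrite size_map size_cat !size_iota subnKC //; exact: ltnW.
- apply: (@pairwise_of _ (fun e => is_edge n.*2 e /\ sumc k n e)) => //.
    by move=> e he; apply: Mk_prop.
  by move=> e f [? ?] [? ?] ?; apply: (@disj_sum k n).
Qed.

Lemma lower_bound {n S} :
  (forall M, SPM n M -> has (fun e => e \in S) M) ->
  n <= size [seq e <- S | is_edge n.*2 e].
Proof.
move=> blk.
pose w k := nth (0, 0) (Mk k n) (find (fun e => e \in S) (Mk k n)).
have wP k : k < n -> w k \in Mk k n /\ w k \in S.
  move=> hk; have hh := blk _ (SPM_Mk hk); split.
    by apply: mem_nth; rewrite -has_find.
  exact: (nth_find (0,0) hh).
suff : size (map w (iota 0 n)) <= size [seq e <- S | is_edge n.*2 e] by rewrite size_map size_iota.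
apply: uniq_leq_size.
  rewrite map_inj_in_uniq ?iota_uniq // => i j; rewrite !mem_iota /= => hi hj eij.
  have hi' : i < n by [].
  have hj' : j < n by [].
  case: (wP i hi') => /(Mk_prop hi') [_ si] _.
  case: (wP j hj') => /(Mk_prop hj') [_ sj] _.
  rewrite eij in si; move: si sj; rewrite /sumc.
  move: hi' hj'; natify; lia.
move=> x /mapP [k]; rewrite mem_iota /= => hk ->.
case: (wP k hk) => h1 h2; rewrite mem_filter h2 andbT.
by case: (Mk_prop hk h1).
Qed.

Lemma extend_SPM {m M} : 2 <= m -> SPM (m - 1) M ->
  SPM m (rcons M (m.*2 - 2, m.*2 - 1)).
Proof.
move=> hm [aM uM sM pM].
have eM : forall x, x \in M -> is_edge (m - 1).*2 x by apply/allP.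
split.
- apply/allP => x; rewrite mem_rcons inE => /orP [/eqP -> | hx].
    rewrite /is_edge /=; apply/andP; split; apply/leP; move: hm; natify; lia.
  move: (eM x hx); rewrite /is_edge; case: x {hx} => a b /=.
  move=> h; apply/andP; split; apply/leP; move: hm h; natify; lia.
- rewrite rcons_uniq uM andbT; apply/negP => /eM; rewrite /is_edge /=.
  move: hm; natify; lia.
- rewrite size_rcons sM; move: hm; natify; lia.
- rewrite -cats1 pairwise_cat pM /= andbT; apply/allrelP => x y hx.
  rewrite inE => /eqP ->; move: (eM x hx); case: x {hx} => a b.
  rewrite /is_edge /disjoint_edges /crossing /= => h.
  move: hm h; natify.
  repeat (apply/andP; split); try (apply/eqP; rewrite -?addnn -?plusE -?minusE; lia).
  apply/negP => /orP [/andP [/andP [? ?] ?] | /andP [/andP [? ?] ?]]; natify; lia.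
Qed.

Theorem claim3p4 (m : nat) (B : seq (nat * nat)) :
  2 <= m ->
  blocker m B ->
  (m.*2 - 3, m.*2 - 2) \in B ->
  (m.*2 - 2, m.*2 - 1) \notin B ->
  let B' := [seq x <- B | x != (m.*2 - 3, m.*2 - 2)] in
  all (is_edge (m.*2 - 2)) B' /\ blocker (m - 1) B'.
Proof.
move=> hm [[allB uqB blk] szB] eB fB B'.
have uB' : uniq B' by rewrite filter_uniq.
have szB' : size B' = m - 1.
  rewrite /B' size_filter.
  have := count_predC (pred1 (m.*2 - 3, m.*2 - 2)) B.
  rewrite (count_uniq_mem _ uqB) eB szB => h.
  change (count (predC (pred1 (m.*2 - 3, m.*2 - 2))) B = m - 1).
  move: (count _ B) h => c /= h; move: h hm; natify; lia.
have blk' : forall M, SPM (m - 1) M -> has (fun e => e \in B') M.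
  move=> M hM; have := blk _ (extend_SPM hm hM).
  case/hasP => x; rewrite mem_rcons inE => /orP [/eqP -> | hx] xB.
    by rewrite xB in fB.
  apply/hasP; exists x => //; rewrite mem_filter xB andbT.
  case: hM => aM _ _ _; move/allP: aM => /(_ x hx); case: x {hx xB} => a b.
  rewrite /is_edge /= => h; apply/negP => /eqP [_ hb]; move: hm h hb; natify; lia.
have lb := lower_bound blk'.
have allB' : all (is_edge (m - 1).*2) B'.
  rewrite all_count eqn_leq count_size /= szB' -size_filter.
  exact: lb.
have -> : m.*2 - 2 = (m - 1).*2 by move: hm; natify; lia.
by split => //; split.
Qed.
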